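(* Let $n\ge 2$ and let $S$ be an admissible peak set in $S^B_n$. Then \[ \max\{d_\ell(\sigma,\rho) : \sigma,\rho\in P^B(S;n)\}=\begin{cases}2n-1, & \text{if } \{2,n-1\}\subseteq S,\\ 2n, & \text{otherwise.}\end{cases} \]
   Context: $S^B_n$ is the set of bijections $\sigma$ of $\{-n,\dots,-1,1,\dots,n\}$ with $\sigma(-i)=-\sigma(i)$ for all $i$; a signed permutation is written in one-line notation $\sigma(1)\cdots\sigma(n)$. A signed permutation $\sigma$ has a peak at index $i\in\{2,\dots,n-1\}$ if $\sigma(i-1)<\sigma(i)>\sigma(i+1)$ (usual order on integers). $Peak(\sigma)$ is the set of indices where $\sigma$ has a peak, and for $S\subseteq[n]$, $P^B(S;n)=\{\sigma\in S^B_n : Peak(\sigma)=S\}$. $S$ is an admissible peak set if $P^B(S;n)\neq\emptyset$ (equivalently, $S\subseteq\{2,\dots,n-1\}$ and $S$ contains no two consecutive integers). The $\ell_\infty$-metric is $d_\ell(\sigma,\rho)=\max\{|\sigma(i)-\rho(i)| : i\in[n]\}$. *)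

(* Defs.v *)
From mathcomp Require Import all_boot all_order all_algebra.
Set Implicit Arguments. Unset Strict Implicit. Unset Printing Implicit Defensive.
Import Order.TTheory GRing.Theory Num.Theory.
Local Open Scope ring_scope.

Definition signed_dom (n : nat) (x : int) : bool := (x != 0) && (`|x|%N <= n)%N.

(* sigma is a signed permutation of S^B_n: a bijection of signed_dom n onto
   itself with sigma(-i) = -sigma(i).  Values outside the domain are irrelevant. *)
Definition is_signed_perm (n : nat) (sigma : int -> int) : Prop :=
  [/\ {in signed_dom n, forall x, signed_dom n (sigma x)},
      {in signed_dom n &, injective sigma},
      (forall y, signed_dom n y -> exists2 x, signed_dom n x & sigma x = y)
    & {in signed_dom n, forall i, sigma (- i) = - sigma i}].

Definition is_peak (n : nat) (sigma : int -> int) (i : nat) : bool :=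
  [&& (2 <= i)%N, (i <= n.-1)%N,
      sigma (i.-1)%:Z < sigma i%:Z & sigma (i.+1)%:Z < sigma i%:Z].

Definition peak_set_eq (n : nat) (sigma : int -> int) (S : pred nat) : Prop :=
  forall i : nat, S i = is_peak n sigma i.

Definition in_PB (S : pred nat) (n : nat) (sigma : int -> int) : Prop :=
  is_signed_perm n sigma /\ peak_set_eq n sigma S.

Definition admissible (S : pred nat) (n : nat) : Prop :=
  exists sigma, in_PB S n sigma.

Definition d_linf (n : nat) (sigma rho : int -> int) : nat :=
  \max_(1 <= i < n.+1) `|sigma i%:Z - rho i%:Z|%N.

(* Main.v *)
Require Import Defs.
From mathcomp Require Import all_boot all_order all_algebra.
From mathcomp Require Import zify.
Import Order.TTheory GRing.Theory Num.Theory.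
Local Open Scope ring_scope.
Definition vv (a : nat -> nat) (s : nat -> bool) (k : nat) : int :=
  if s k then (a k)%:Z else - (a k)%:Z.
Definition mk (a : nat -> nat) (s : nat -> bool) (x : int) : int :=
  if 0 <= x then vv a s `|x|%N else - vv a s `|x|%N.
Lemma mkP a s (k : nat) : mk a s k%:Z = vv a s k.
Proof. by rewrite /mk le0z_nat. Qed.
Lemma mkN a s (k : nat) : (1 <= k)%N -> mk a s (- k%:Z) = - vv a s k.
Proof.
move=> hk; rewrite /mk abszN absz_nat.
have -> : (0 <= - k%:Z) = false by lia.
by [].
Qed.
Lemma domP n x : signed_dom n x ->
  exists k : nat, [/\ (1 <= k)%N, (k <= n)%N & (x = k%:Z \/ x = - k%:Z)].
Proof.
rewrite /signed_dom => /andP [h1 h2]; exists `|x|%N; split; try lia.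
Qed.
Section Inv.
Variables (n : nat) (a : nat -> nat).
Hypothesis ha : forall k, (1 <= k)%N -> (k <= n)%N -> [/\ (1 <= a k)%N, (a k <= n)%N & a (a k) = k].

Lemma mk_dom s x : signed_dom n x -> signed_dom n (mk a s x).
Proof.
case/domP=> k [h1 h2 hx]; case: (ha _ h1 h2) => h3 h4 _.
rewrite /signed_dom; case: hx => ->; [rewrite mkP | rewrite mkN //]; rewrite /vv;
case: ifP => _; apply/andP; split; lia.
Qed.
Lemma mk_gf s t x : (forall k, (1 <= k)%N -> (k <= n)%N -> t (a k) = s k) ->
  signed_dom n x -> mk a t (mk a s x) = x.
Proof.
move=> hst; case/domP=> k [h1 h2 hx]; case: (ha _ h1 h2) => h3 h4 h5.
have ht := hst _ h1 h2.
case: hx => ->; [rewrite mkP | rewrite mkN //]; rewrite /vv;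
case hs: (s k); rewrite ?opprK ?mkP ?mkN // /vv ht hs h5 ?opprK //.
Qed.
Lemma mk_perm s : is_signed_perm n (mk a s).
Proof.
have hst : forall k, (1 <= k)%N -> (k <= n)%N -> s (a (a k)) = s k.
  by move=> k h1 h2; case: (ha _ h1 h2) => _ _ ->.
split.
- by move=> x hx; apply: mk_dom.
- move=> x y hx hy e.
  have gx := @mk_gf s (fun k => s (a k)) x hst hx; have gy := @mk_gf s (fun k => s (a k)) y hst hy.
  by rewrite -gx -gy e.
- move=> y hy; exists (mk a (fun k => s (a k)) y); first by apply: mk_dom.
  by apply: (@mk_gf (fun k => s (a k)) s) => // k h1 h2.
- move=> x; case/domP=> k [h1 h2 [->|->]]; rewrite ?opprK ?mkP ?mkN //.
all: by rewrite opprK. Qed.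
End Inv.

Lemma dom_nat n (k : nat) : (1 <= k)%N -> (k <= n)%N -> signed_dom n k%:Z.
Proof. by move=> h1 h2; rewrite /signed_dom; apply/andP; split; lia. Qed.

Lemma val_bound n s (k : nat) : is_signed_perm n s -> (1 <= k)%N -> (k <= n)%N ->
  - n%:Z <= s k%:Z <= n%:Z.
Proof.
case=> hd _ _ _ h1 h2; have := hd _ (@dom_nat n k h1 h2).
rewrite /signed_dom => /andP [_ h]; apply/andP; split; lia.
Qed.

Lemma adm_range (S : pred nat) n : admissible S n -> forall i, S i -> (2 <= i)%N /\ (i <= n.-1)%N.
Proof.
case=> s [_ hp] i; rewrite hp /is_peak => /and4P [? ? _ _]; by [].
Qed.

Lemma adm_nc (S : pred nat) n : admissible S n -> forall i, S i -> S i.+1 = false.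
Proof.
case=> s [_ hp] i; rewrite !hp /is_peak => /and4P [_ _ _ h].
apply/negbTE; apply/negP => /and4P [_ _ h' _]; move: h h'; rewrite /=; lia.
Qed.

Lemma peak_gen (S : pred nat) n a s :
  (forall i, S i -> (2 <= i)%N /\ (i <= n.-1)%N) ->
  (forall i, (2 <= i)%N -> (i <= n.-1)%N -> S i ->
     vv a s i.-1 < vv a s i /\ vv a s i.+1 < vv a s i) ->
  (forall i, (2 <= i)%N -> (i <= n.-1)%N -> S i = false ->
     vv a s i < vv a s i.-1 \/ vv a s i < vv a s i.+1) ->
  peak_set_eq n (mk a s) S.
Proof.
move=> hr hS hN i; rewrite /is_peak !mkP.
case Si: (S i).
  have [h1 h2] := hr _ Si; have [h3 h4] := hS _ h1 h2 Si.
  by rewrite h1 h2 h3 h4.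
case: (leqP 2 i) => h1 //=; case: (leqP i n.-1) => h2 //=.
symmetry; apply/negbTE/negP => /andP [h3 h4].
have := hN _ h1 h2 Si; move: h3 h4; lia.
Qed.

Section Cons.
Variables (S : pred nat) (n : nat).
Hypothesis hn : (2 <= n)%N.
Hypothesis hr : forall i, S i -> (2 <= i)%N /\ (i <= n.-1)%N.
Hypothesis hc : forall i, S i -> S i.+1 = false.

Lemma hprev i : S i -> S i.-1 = false.
Proof.
move=> Si; case: (hr _ Si) => h1 _; apply/negbTE/negP => h.
by have := hc _ h; rewrite prednK ?Si //; lia.
Qed.

Definition aid (k : nat) := k.
Definition arev (k : nat) := (n.+1 - k)%N.
Definition asw (k : nat) := if k == n then n.-1 else if k == n.-1 then n else k.
Definition sn (k : nat) := S k || (k == n).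
Definition s1 (k : nat) := S k || (k == 1%N).

Lemma inv_id k : (1 <= k)%N -> (k <= n)%N -> [/\ (1 <= aid k)%N, (aid k <= n)%N & aid (aid k) = k].
Proof. by rewrite /aid. Qed.
Lemma inv_rev k : (1 <= k)%N -> (k <= n)%N -> [/\ (1 <= arev k)%N, (arev k <= n)%N & arev (arev k) = k].
Proof. rewrite /arev => h1 h2; split; lia. Qed.
Lemma inv_sw k : (1 <= k)%N -> (k <= n)%N -> [/\ (1 <= asw k)%N, (asw k <= n)%N & asw (asw k) = k].
Proof.
rewrite /asw => h1 h2.
case: (eqVneq k n) => e1.
  rewrite eqxx; have -> : (n.-1 == n) = false by apply/eqP; lia.
  by split; lia.
case: (eqVneq k n.-1) => e2.
  by rewrite eqxx; split; lia.
rewrite (negbTE e1) (negbTE e2); split; lia.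
Qed.

Lemma P0_peaks : peak_set_eq n (mk aid S) S.
Proof.
apply: peak_gen => // i h1 h2 Si.
  rewrite /vv /aid Si (hprev _ Si) (hc _ Si); lia.
rewrite /vv /aid Si; case: (S i.-1); lia.
Qed.

Lemma P0n_peaks : S n.-1 = false -> peak_set_eq n (mk aid sn) S.
Proof.
move=> hS; apply: peak_gen => // i h1 h2 Si.
  have e : (i.+1 == n) = false.
    by apply/eqP => e; move: hS; rewrite -e /= Si.
  rewrite /vv /aid /sn Si (hprev _ Si) (hc _ Si) e.
  have -> : (i == n) = false by apply/eqP; lia.
  have -> : (i.-1 == n) = false by apply/eqP; lia.
  simpl; lia.
rewrite /vv /aid /sn Si.
have -> : (i == n) = false by apply/eqP; lia.
have -> : (i.-1 == n) = false by apply/eqP; lia.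
case: (S i.-1); simpl; lia.
Qed.

Lemma PA_peaks : peak_set_eq n (mk arev S) S.
Proof.
apply: peak_gen => // i h1 h2 Si.
  rewrite /vv /arev Si (hprev _ Si) (hc _ Si); lia.
rewrite /vv /arev Si; case: (S i.+1); lia.
Qed.

Lemma PA1_peaks : S 2 = false -> peak_set_eq n (mk arev s1) S.
Proof.
move=> hS; apply: peak_gen => // i h1 h2 Si.
  have e : (i.-1 == 1%N) = false.
    apply/eqP => e; have ei : i = 2%N by lia.
    by move: Si; rewrite ei hS.
  rewrite /vv /arev /s1 Si (hprev _ Si) (hc _ Si) e.
  have -> : (i == 1%N) = false by apply/eqP; lia.
  have -> : (i.+1 == 1%N) = false by apply/eqP; lia.
  simpl; lia.
rewrite /vv /arev /s1 Si.
have -> : (i == 1%N) = false by apply/eqP; lia.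
have -> : (i.+1 == 1%N) = false by apply/eqP; lia.
case: (S i.+1); simpl; lia.
Qed.

Lemma Psw_peaks : S n.-1 -> peak_set_eq n (mk asw sn) S.
Proof.
move=> hS; apply: peak_gen => // i h1 h2 Si.
  rewrite /vv /asw /sn Si (hprev _ Si) (hc _ Si).
  have -> : (i.-1 == n) = false by apply/eqP; lia.
  have -> : (i.-1 == n.-1) = false by apply/eqP; lia.
  have -> : (i == n) = false by apply/eqP; lia.
  case: (eqVneq i n.-1) => ei.
    have -> : (i.+1 == n) = true by apply/eqP; lia.
    simpl; lia.
  have -> : (i.+1 == n) = false by apply/eqP; lia.
  have -> : (i.+1 == n.-1) = false.
    by apply/eqP => e; move: (hc _ Si); rewrite e hS.
  simpl; lia.
rewrite /vv /asw /sn Si.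
have -> : (i.-1 == n) = false by apply/eqP; lia.
have -> : (i.-1 == n.-1) = false by apply/eqP; lia.
have -> : (i == n) = false by apply/eqP; lia.
have -> : (i == n.-1) = false by apply/eqP => e; move: Si; rewrite e hS.
case: (eqVneq i.+1 n.-1) => ei.
  rewrite ei hS /=; repeat (case: ifP => ?); lia.
rewrite /=; repeat (case: ifP => ?); lia.
Qed.
End Cons.

Lemma key (S : pred nat) n s r (i : nat) : (2 <= n)%N -> in_PB S n s -> in_PB S n r ->
  S 2 -> S n.-1 -> (1 <= i)%N -> (i <= n)%N -> s i%:Z = n%:Z -> r i%:Z = - n%:Z -> False.
Proof.
move=> hn [hsp hps] [hrp hpr] S2 Sn h1 h2 e1 e2.
have bs := @val_bound n s _ hsp; have br := @val_bound n r _ hrp.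
case: (eqVneq i 1%N) => [ei|ne1].
  move: S2; rewrite hps /is_peak => /and4P [_ _ h _]; rewrite ei in e1.
  have h' : s 1%:Z < s 2%:Z := h.
  have := bs 2%N isT hn; lia.
case: (eqVneq i n) => [ei|nen].
  move: Sn; rewrite hps /is_peak => /and4P [_ _ _ h]; move: h e1; rewrite ei prednK; last lia.
  have := bs n.-1 ltac:(lia) ltac:(lia); lia.
have Sf : S i = false.
  rewrite hpr /is_peak; apply/negbTE/negP => /and4P [_ _ h _]; move: h e2.
  have := br i.-1 ltac:(lia) ltac:(lia); lia.
have : S i.
  case: hsp => _ hinj _ _.
  have dn := @dom_nat n.
  rewrite hps /is_peak; apply/and4P; split; try lia.
    have := bs i.-1 ltac:(lia) ltac:(lia).
    have : s i.-1%:Z != s i%:Z.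
      apply/eqP => e; have := hinj _ _ (dn i.-1 ltac:(lia) ltac:(lia)) (dn i ltac:(lia) ltac:(lia)) e; lia.
    lia.
  have := bs i.+1 ltac:(lia) ltac:(lia).
  have : s i.+1%:Z != s i%:Z.
    apply/eqP => e; have := hinj _ _ (dn i.+1 ltac:(lia) ltac:(lia)) (dn i ltac:(lia) ltac:(lia)) e; lia.
  lia.
by rewrite Sf.
Qed.

Lemma dl_ge n s r (j : nat) : (1 <= j)%N -> (j <= n)%N ->
  (`|s j%:Z - r j%:Z|%N <= d_linf n s r)%N.
Proof.
move=> h1 h2; rewrite /d_linf.
apply: (@leq_bigmax_seq _ _ _ (fun i : nat => `|s i%:Z - r i%:Z|%N) j) => //.
by rewrite mem_index_iota; apply/andP; split; lia.
Qed.

Close Scope ring_scope.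

Theorem theorem4p8 (n : nat) (S : pred nat) :
  (2 <= n)%N -> admissible S n ->
  let m := if S 2 && S n.-1 then (2 * n).-1 else (2 * n)%N in
  (exists sigma rho, [/\ in_PB S n sigma, in_PB S n rho & d_linf n sigma rho = m])
  /\ (forall sigma rho, in_PB S n sigma -> in_PB S n rho -> (d_linf n sigma rho <= m)%N).
Proof.
move=> hn hadm m.
have hr := @adm_range S n hadm; have hc := @adm_nc S n hadm.
have ub : forall sigma rho, in_PB S n sigma -> in_PB S n rho -> (d_linf n sigma rho <= m)%N.
  move=> s r hs hr'; rewrite /d_linf; apply/bigmax_leqP_seq => i.
  rewrite mem_index_iota => /andP [h1 h2] _.
  have b1 := @val_bound n s i (proj1 hs) h1 ltac:(lia).
  have b2 := @val_bound n r i (proj1 hr') h1 ltac:(lia).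
  rewrite /m; case: ifP => [/andP [S2 Sn] | _]; last lia.
  have k1 : ~ (s (Posz i) = Posz n /\ r (Posz i) = (- Posz n)%R).
    by case=> e1 e2; exact: (@key S n s r i hn hs hr' S2 Sn h1 ltac:(lia) e1 e2).
  have k2 : ~ (r (Posz i) = Posz n /\ s (Posz i) = (- Posz n)%R).
    by case=> e1 e2; exact: (@key S n r s i hn hr' hs S2 Sn h1 ltac:(lia) e1 e2).
  lia.
split => //.
have S1 : S 1 = false by apply/negbTE/negP => /hr; lia.
have Snf : S n = false by apply/negbTE/negP => /hr; lia.
have P0 : in_PB S n (mk aid S) := conj (@mk_perm n _ (@inv_id n) S) (@P0_peaks S n hn hr hc).
have PA : in_PB S n (mk (arev n) S) := conj (@mk_perm n _ (@inv_rev n hn) S) (@PA_peaks S n hn hr hc).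
case S2: (S 2); case Sn: (S n.-1).
- have Q : in_PB S n (mk (asw n) (sn S n)) :=
    conj (@mk_perm n _ (@inv_sw n hn) _) (@Psw_peaks S n hn hr hc Sn).
  exists (mk aid S), (mk (asw n) (sn S n)); split => //.
  apply/eqP; rewrite eqn_leq ub //.
  have := @dl_ge n (mk aid S) (mk (asw n) (sn S n)) n ltac:(lia) (leqnn n).
  rewrite /m S2 Sn !mkP /vv /aid /asw /sn Snf eqxx /=; lia.
- have Q : in_PB S n (mk aid (sn S n)) :=
    conj (@mk_perm n _ (@inv_id n) _) (@P0n_peaks S n hn hr hc Sn).
  exists (mk aid S), (mk aid (sn S n)); split => //.
  apply/eqP; rewrite eqn_leq ub //.
  have := @dl_ge n (mk aid S) (mk aid (sn S n)) n ltac:(lia) (leqnn n).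
  rewrite /m S2 Sn !mkP /vv /aid /sn Snf eqxx /=; lia.
all: have Q : in_PB S n (mk (arev n) (s1 S)) :=
    conj (@mk_perm n _ (@inv_rev n hn) _) (@PA1_peaks S n hn hr hc S2).
all: exists (mk (arev n) S), (mk (arev n) (s1 S)); split => //.
all: apply/eqP; rewrite eqn_leq ub //.
all: have := @dl_ge n (mk (arev n) S) (mk (arev n) (s1 S)) 1 (leqnn 1) ltac:(lia).
all: rewrite /m S2 !mkP /vv /arev /s1 S1 eqxx /=; lia.
Qed.
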